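(* Let $\Delta_1$ and $\Delta_2$ be simplicial complexes on disjoint vertex sets. Then $\Delta_1$ and $\Delta_2$ are both $k$-shellable if and only if the join $\Delta_1\cdot\Delta_2$ is $k$-shellable.
   Context: The join is $\Delta_1\cdot\Delta_2=\{\sigma\cup\tau:\sigma\in\Delta_1,\tau\in\Delta_2\}$. $\langle F_1,\ldots,F_s\rangle$ denotes the simplicial complex with facets $F_1,\dots,F_s$. A simplicial complex $\Gamma$ of dimension $d$ is $k$-shellable ($1\le k\le d+1$) if its facets can be ordered $F_1,\ldots,F_r$ such that for every $j=2,\ldots,r$, $\Gamma_j=\langle F_j\rangle\cap\langle F_1,\ldots,F_{j-1}\rangle$ satisfies (i) $\Gamma_j$ is generated by a nonempty set of faces of $\langle F_j\rangle$ of dimension $|F_j|-k-1$; (ii) if $\Gamma_j$ has more than one facet, then for every two distinct facets $\sigma,\tau$ of $\Gamma_j$, $F_j\subseteq\sigma\cup\tau$.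
   Formalization: The equivalence holds only for k ≤ dim Δ₁ + 1 and k ≤ dim Δ₂ + 1, that is, for k in the admissible range of both Δ₁ and Δ₂. The statement above fails without it. *)

(* Defs.v *)
From mathcomp Require Import all_boot.
Set Implicit Arguments. Unset Strict Implicit. Unset Printing Implicit Defensive.

Section Complexes.
Variable T : finType.

Definition is_complex (D : {set {set T}}) : bool :=
  (set0 \in D) && [forall F in D, forall G : {set T}, (G \subset F) ==> (G \in D)].

Definition gen (S : {set {set T}}) : {set {set T}} :=
  [set s : {set T} | [exists F in S, s \subset F]].

Definition facets (D : {set {set T}}) : {set {set T}} :=
  [set F in D | [forall G in D, (F \subset G) ==> (G == F)]].

Definition vertices (D : {set {set T}}) : {set T} := \bigcup_(F in D) F.

(* dim D + 1 = maximal cardinality of a face *)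
Definition dimp1 (D : {set {set T}}) : nat := \max_(F in D) #|F|.

Definition join (D1 D2 : {set {set T}}) : {set {set T}} :=
  [set s :|: t | s in D1, t in D2].

(* Condition for step j (0-based index j >= 1) of the facet ordering Fs:
   Gamma_j = <F_j> /\ <F_1,...,F_{j-1}> satisfies (i) and (ii). *)
Definition shelling_step (k : nat) (Fs : seq {set T}) (j : nat) : Prop :=
  let Fj := nth set0 Fs j in
  let Gam := gen [set Fj] :&: gen [set F in take j Fs] in
  (* (i): generated by a nonempty set of faces of <F_j> of dimension
          |F_j| - k - 1, i.e. of cardinality |F_j| - k *)
  (exists G : {set {set T}},
      [/\ G != set0,
          forall s, s \in G -> (s \subset Fj) /\ #|s| + k = #|Fj|
        & Gam = gen G]) /\
  (1 < #|facets Gam| ->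
     forall s t, s \in facets Gam -> t \in facets Gam -> s != t ->
       Fj \subset s :|: t).

Definition k_shellable (k : nat) (D : {set {set T}}) : Prop :=
  (1 <= k <= dimp1 D) /\
  exists Fs : seq {set T},
    [/\ uniq Fs, [set F in Fs] = facets D &
        forall j, 0 < j < size Fs -> shelling_step k Fs j].

End Complexes.

(* Main.v *)
Require Import Defs.
From mathcomp Require Import all_boot.
Set Implicit Arguments. Unset Strict Implicit. Unset Printing Implicit Defensive.

Section Aux.
Variable T : finType.
Implicit Types (F G x s t : {set T}) (S : {set {set T}}).

Lemma genP S x : reflect (exists2 F, F \in S & x \subset F) (x \in gen S).
Proof.
rewrite /gen inE; apply: (iffP existsP) => [[F /andP[]]|[F FS xF]]; first by eauto.
by exists F; rewrite FS.
Qed.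

Lemma gen1 F x : (x \in gen [set F]) = (x \subset F).
Proof.
apply/genP/idP => [[G /set1P -> //]|xF]; by exists F; rewrite ?set11.
Qed.

Lemma facetP S F :
  reflect (F \in S /\ forall G, G \in S -> F \subset G -> G = F) (F \in facets S).
Proof.
rewrite /facets inE; apply: (iffP andP) => [[FS /forallP H]|[FS H]]; split => //.
  by move=> G GS FG; have := H G; rewrite GS FG => /eqP.
by apply/forallP => G; apply/implyP => GS; apply/implyP => FG; rewrite (H G GS FG).
Qed.

Definition step k F (P : {set {set T}}) : Prop :=
  let Gam := gen [set F] :&: gen P in
  (exists G : {set {set T}},
      [/\ G != set0,
          forall s, s \in G -> (s \subset F) /\ #|s| + k = #|F|
        & Gam = gen G]) /\
  (1 < #|facets Gam| ->
     forall s t, s \in facets Gam -> t \in facets Gam -> s != t ->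
       F \subset s :|: t).

Lemma shelling_stepE k Fs j :
  shelling_step k Fs j = step k (nth set0 Fs j) [set F in take j Fs].
Proof. by []. Qed.

Definition goodE k F (Gam : {set {set T}}) := exists Gen : {set {set T}},
  [/\ forall s, s \in Gen -> s \subset F /\ #|s| + k = #|F|,
      Gam = gen Gen &
      forall s t, s \in Gen -> t \in Gen -> s != t -> F \subset s :|: t].

Lemma facets_gen_eqsize (Gen : {set {set T}}) c :
  (forall s, s \in Gen -> #|s| = c) -> facets (gen Gen) = Gen.
Proof.
move=> Hc; apply/setP => s; apply/facetP/idP.
  case=> /genP[g gG sg] H.
  have gg : g \in gen Gen by apply/genP; exists g.
  by rewrite -(H g gg sg).
move=> sG; split; first by apply/genP; exists s.
move=> h /genP[g gG hg] sh; apply/eqP; rewrite eq_sym eqEcard sh /=.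
by rewrite (Hc s sG) -(Hc g gG) subset_leq_card.
Qed.

Lemma step_goodE k F P : P != set0 ->
  step k F P <-> goodE k F (gen [set F] :&: gen P).
Proof.
move=> /set0Pn[p pP].
have e0 : set0 \in gen [set F] :&: gen P.
  by rewrite inE gen1 sub0set; apply/genP; exists p => //; rewrite sub0set.
split.
  case=> [[G [G0 HG ->]] H2]; exists G; split => // s t sG tG st.
  have fG : facets (gen G) = G.
    apply: (@facets_gen_eqsize _ (#|F| - k)) => u uG.
    by case: (HG u uG) => _ <-; rewrite addnK.
  apply: H2; rewrite ?fG //.
  apply: (leq_trans _ (subset_leq_card (_ : [set s; t] \subset G))).
    by rewrite cards2 st.
  by apply/subsetP => u /set2P[]->.
case=> Gen [HG Heq H2]; split.
  exists Gen; split => //.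
  apply/set0Pn; move: e0; rewrite Heq => /genP[g gG _]; by exists g.
have fG : facets (gen [set F] :&: gen P) = Gen.
  rewrite Heq; apply: (@facets_gen_eqsize _ (#|F| - k)) => u uG.
  by case: (HG u uG) => _ <-; rewrite addnK.
by rewrite fG => _ s t; apply: H2.
Qed.

Lemma shell_iff (P : {set T} -> {set {set T}} -> Prop) (l : seq {set T}) :
  (forall j, 0 < j < size l -> P (nth set0 l j) [set y in take j l]) <->
  (forall (l1 : seq {set T}) y l2, l = l1 ++ y :: l2 -> l1 != [::] -> P y [set z in l1]).
Proof.
split => H.
  move=> l1 y l2 e ne; subst l; have := H (size l1).
  rewrite nth_cat ltnn subnn /= take_size_cat //; apply.
  rewrite size_cat /= lt0n size_eq0 ne /= -addSnnS leq_addr //.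
move=> j /andP[j0 js]; apply: (H (take j l) _ (drop j.+1 l)).
  by rewrite -drop_nth // cat_take_drop.
by rewrite -size_eq0 size_take js -lt0n.
Qed.

End Aux.

Lemma cat_split A (a b s1 s2 : seq A) x : a ++ b = s1 ++ x :: s2 ->
  (exists s', a = s1 ++ x :: s') \/ (exists b1, s1 = a ++ b1 /\ b = b1 ++ x :: s2).
Proof.
elim: a s1 => [|y a IH] s1 /=; first by move=> ->; right; exists s1.
case: s1 => [|z s1] /= [<-]; first by move=> _; left; exists a.
move=> /IH [[s' ->]|[b1 [-> ->]]]; first by left; exists s'.
by right; exists b1.
Qed.

Lemma map_split A B (f : A -> B) g s1 x s2 : map f g = s1 ++ x :: s2 ->
  exists g1 y g2, [/\ g = g1 ++ y :: g2, s1 = map f g1 & x = f y].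
Proof.
elim: g s1 => [|y g IH] [|z s1] //= [e1 e2]; first by exists [::], y, g.
case: (IH _ e2) => g1 [y' [g2 [-> -> ->]]].
by exists (y :: g1), y', g2; rewrite /= e1.
Qed.

Lemma filter_split A B (f : A -> B) (p : pred A) Hs s1 x s2 :
  map f (filter p Hs) = s1 ++ x :: s2 ->
  exists h1 h h2, [/\ Hs = h1 ++ h :: h2, p h, x = f h & s1 = map f (filter p h1)].
Proof.
elim: Hs s1 => [|h Hs IH] s1 /=; first by case: s1.
case ph: (p h) => /=.
  case: s1 => [|z s1] /= [e1 e2]; first by exists [::], h, Hs; split; rewrite ?e1.
  case: (IH _ e2) => h1 [h' [h2 [-> ph' -> ->]]].
  by exists (h :: h1), h', h2; split => //=; rewrite ph /= e1.
move=> /IH [h1 [h' [h2 [-> ph' -> ->]]]].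
by exists (h :: h1), h', h2; rewrite /= ph.
Qed.

Lemma allpairs_split (T : finType) (Fs Gs : seq {set T}) s1 x s2 :
  [seq F :|: G | F <- Fs, G <- Gs] = s1 ++ x :: s2 ->
  exists f1 F f2 g1 G g2, [/\ Fs = f1 ++ F :: f2, Gs = g1 ++ G :: g2, x = F :|: G &
     s1 = [seq F' :|: G' | F' <- f1, G' <- Gs] ++ [seq F :|: G' | G' <- g1]].
Proof.
elim: Fs s1 => [|F Fs IH] s1; first by case: s1.
have AC f : [seq F0 :|: G | F0 <- F :: f, G <- Gs] =
   [seq F :|: G | G <- Gs] ++ [seq F0 :|: G | F0 <- f, G <- Gs].
  exact: (@allpairs_cons _ (fun _ => {set T}) _ (fun F0 G : {set T} => F0 :|: G) F f (fun _ => Gs)).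
rewrite (AC Fs) => E; case: (cat_split E) => [[s' e]|[b1 [-> e]]].
  case: (map_split e) => g1 [G [g2 [eG -> ->]]].
  by exists [::], F, Fs, g1, G, g2.
case: (IH _ e) => f1 [F' [f2 [g1 [G [g2 [-> eG -> ->]]]]]].
exists (F :: f1), F', f2, g1, G, g2; split => //.
by rewrite (AC f1) catA.
Qed.

Section Abs.
Variable T : finType.
Implicit Types (F G x s t : {set T}).

Lemma card_disjU F G : [disjoint F & G] -> #|F :|: G| = #|F| + #|G|.
Proof. by move=> d; rewrite cardsU (disjoint_setI0 d) cards0 subn0. Qed.

Lemma goodE_join k F G (Gam1 Gam2 Gam : {set {set T}}) :
  [disjoint F & G] -> goodE k F Gam1 -> goodE k G Gam2 ->
  (forall x, (x \in Gam) = (x \subset F :|: G) && ((x :&: F \in Gam1) || (x :&: G \in Gam2))) ->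
  goodE k (F :|: G) Gam.
Proof.
move=> dFG [Gen1 [H1 E1 P1]] [Gen2 [H2 E2 P2]] HG.
have nFG v : v \in F -> v \in G -> False.
  by move=> vF vG; have := disjointFr dFG vF; rewrite vG.
exists ([set s :|: G | s in Gen1] :|: [set F :|: t | t in Gen2]); split.
- move=> u /setUP[/imsetP[s sG ->]|/imsetP[t tG ->]].
    case: (H1 s sG) => sF cs; split; first by rewrite setSU.
    have dsG : [disjoint s & G].
      by rewrite -setI_eq0; apply/eqP/setP => v; rewrite !inE;
         apply/negbTE/negP => /andP[/(subsetP sF) a b]; apply: (nFG v).
    by rewrite !card_disjU // addnAC cs.
  case: (H2 t tG) => tG' ct; split; first by rewrite setUS.
  have dFt : [disjoint F & t].
    by rewrite -setI_eq0; apply/eqP/setP => v; rewrite !inE;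
       apply/negbTE/negP => /andP[a /(subsetP tG') b]; apply: (nFG v).
  by rewrite !card_disjU // -addnA ct.
- apply/setP => x; rewrite HG E1 E2; apply/idP/genP.
    case/andP => xFG /orP[/genP[s sG xs]|/genP[t tG xt]].
      exists (s :|: G); first by rewrite inE; apply/orP; left; apply: imset_f.
      apply/subsetP => v vx; rewrite inE; have := subsetP xFG v vx; rewrite inE.
      case/orP => [vF|->]; last by rewrite orbT.
      by rewrite (subsetP xs) // inE vx vF.
    exists (F :|: t); first by rewrite inE; apply/orP; right; apply: imset_f.
    apply/subsetP => v vx; rewrite inE; have := subsetP xFG v vx; rewrite inE.
    case/orP => [->//|vG].
    by rewrite (subsetP xt) ?orbT // inE vx vG.
  case=> g /setUP[/imsetP[s sG ->]|/imsetP[t tG ->]] xg.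
    case: (H1 s sG) => sF _.
    apply/andP; split; first by apply: (subset_trans xg); rewrite setSU.
    apply/orP; left; apply/genP; exists s => //.
    apply/subsetP => v; rewrite inE => /andP[vx vF].
    have := subsetP xg v vx; rewrite inE => /orP[//|vG]; case: (nFG v vF vG).
  case: (H2 t tG) => tG' _.
  apply/andP; split; first by apply: (subset_trans xg); rewrite setUS.
  apply/orP; right; apply/genP; exists t => //.
  apply/subsetP => v; rewrite inE => /andP[vx vG].
  have := subsetP xg v vx; rewrite inE => /orP[vF|//]; case: (nFG v vF vG).
- move=> a b /setUP[/imsetP[s sG ->]|/imsetP[t tG ->]]
              /setUP[/imsetP[s' sG' ->]|/imsetP[t' tG' ->]] ne.
  + have ss : s != s' by apply: contraNneq ne => ->.
    have := P1 _ _ sG sG' ss => sub.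
    apply/subsetP => v; rewrite !inE => /orP[/(subsetP sub)|->]; rewrite ?orbT //.
    by rewrite inE => /orP[->|->]; rewrite ?orbT.
  + by apply/subsetP => v; rewrite !inE => /orP[->|->]; rewrite ?orbT.
  + by apply/subsetP => v; rewrite !inE => /orP[->|->]; rewrite ?orbT.
  + have tt : t != t' by apply: contraNneq ne => ->.
    have := P2 _ _ tG tG' tt => sub.
    apply/subsetP => v; rewrite !inE => /orP[->|/(subsetP sub)]; rewrite ?orbT //.
    by rewrite inE => /orP[->|->]; rewrite ?orbT.
Qed.

Lemma goodE_link k F G (Gam Gam1 : {set {set T}}) :
  [disjoint F & G] -> goodE k (F :|: G) Gam ->
  (forall x, (x \in Gam1) = (x \subset F) && (x :|: G \in Gam)) ->
  goodE k F Gam1.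
Proof.
move=> dFG [Gen [H E P]] HG.
have nFG v : v \in F -> v \in G -> False.
  by move=> vF vG; have := disjointFr dFG vF; rewrite vG.
exists ((fun s => s :&: F) @: [set s in Gen | G \subset s]); split.
- move=> u /imsetP[s]; rewrite inE => /andP[sG Gs] ->.
  split; first exact: subsetIr.
  case: (H s sG) => sFG cs.
  have es : s = (s :&: F) :|: G.
    apply/setP => v; rewrite !inE; apply/idP/idP.
      move=> vs; have := subsetP sFG v vs; rewrite inE => /orP[->|->]; by rewrite ?vs ?orbT.
    by case/orP => [/andP[]//|/(subsetP Gs)].
  have d : [disjoint s :&: F & G].
    by rewrite -setI_eq0; apply/eqP/setP => v; rewrite !inE;
       apply/negbTE/negP => /andP[/andP[_ a] b]; apply: (nFG v).
  move: cs; rewrite {1}es !card_disjU // addnAC => /eqP; rewrite eqn_add2r => /eqP //.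
- apply/setP => x; rewrite HG E; apply/andP/genP.
    case=> xF /genP[s sG xGs].
    have Gs : G \subset s by apply: subset_trans xGs; apply: subsetUr.
    exists (s :&: F); first by apply: imset_f; rewrite inE sG Gs.
    by rewrite subsetI xF andbT; apply: subset_trans xGs; apply: subsetUl.
  case=> g /imsetP[s]; rewrite inE => /andP[sG Gs] -> xs.
  split; first by apply: (subset_trans xs); apply: subsetIr.
  apply/genP; exists s => //; rewrite subUset Gs andbT.
  by apply: (subset_trans xs); apply: subsetIl.
- move=> a b /imsetP[s]; rewrite inE => /andP[sG Gs] ->.
  move=> /imsetP[t]; rewrite inE => /andP[tG Gt] -> ne.
  have st : s != t by apply: contraNneq ne => ->.
  have := P _ _ sG tG st => sub.
  apply/subsetP => v vF; have := subsetP sub v; rewrite !inE vF /= => /(_ isT).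
  by rewrite !andbT.
Qed.

End Abs.

Section J.
Variable T : finType.
Variables D1 D2 : {set {set T}}.
Hypothesis disj : [disjoint vertices D1 & vertices D2].
Local Notation V1 := (vertices D1).
Local Notation V2 := (vertices D2).
Implicit Types (F G x s t : {set T}).

Lemma face_subV (D : {set {set T}}) F : F \in D -> F \subset vertices D.
Proof. by move=> FD; apply: (bigcup_sup F FD). Qed.

Lemma facet_subV (D : {set {set T}}) F : F \in facets D -> F \subset vertices D.
Proof. by case/facetP => FD _; apply: face_subV. Qed.

Lemma nV v : v \in V1 -> v \in V2 -> False.
Proof. by move=> a b; have := disjointFr disj a; rewrite b. Qed.

Lemma capU1 F G : F \subset V1 -> G \subset V2 -> (F :|: G) :&: V1 = F.
Proof.
move=> FV GV; apply/setP => v; rewrite !inE.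
case vF: (v \in F); first by rewrite (subsetP FV).
case vG: (v \in G) => //=; apply/negbTE/negP => vV.
by apply: (nV vV); apply: (subsetP GV).
Qed.

Lemma capU2 F G : F \subset V1 -> G \subset V2 -> (F :|: G) :&: V2 = G.
Proof.
move=> FV GV; apply/setP => v; rewrite !inE.
case vG: (v \in G); first by rewrite orbT (subsetP GV).
rewrite orbF; case vF: (v \in F) => //=; apply/negbTE/negP => vV.
by apply: (nV _ vV); apply: (subsetP FV).
Qed.

Lemma disjFG F G : F \subset V1 -> G \subset V2 -> [disjoint F & G].
Proof.
move=> FV GV; rewrite -setI_eq0; apply/eqP/setP => v; rewrite !inE.
apply/negbTE/negP => /andP[a b]; apply: (nV (subsetP FV v a) (subsetP GV v b)).
Qed.

Lemma facets_joinP H : H \in facets (join D1 D2) <->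
  exists F G, [/\ F \in facets D1, G \in facets D2 & H = F :|: G].
Proof.
split.
  case/facetP => /imset2P[s t sD tD ->] Hmax.
  have sV := face_subV sD; have tV := face_subV tD.
  exists s, t; split => //; apply/facetP; split => // u uD su.
    have uV := face_subV uD.
    have := Hmax (u :|: t) (imset2_f _ uD tD) (setSU _ su) => e.
    by rewrite -(capU1 uV tV) e capU1.
  have uV := face_subV uD.
  have := Hmax (s :|: u) (imset2_f _ sD uD) (setUS _ su) => e.
  by rewrite -(capU2 sV uV) e capU2.
case=> F [G [/facetP[FD Fm] /facetP[GD Gm] ->]].
have FV := face_subV FD; have GV := face_subV GD.
apply/facetP; split; first exact: imset2_f.
move=> H' /imset2P[s t sD tD ->] sub.
have sV := face_subV sD; have tV := face_subV tD.
have e1 : s = F.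
  apply: Fm => //; rewrite -(capU1 FV GV) -(capU1 sV tV); exact: setSI.
have e2 : t = G.
  apply: Gm => //; rewrite -(capU2 FV GV) -(capU2 sV tV); exact: setSI.
by rewrite e1 e2.
Qed.

Lemma setseq_neq0 (l : seq {set T}) : l != [::] -> [set y in l] != set0.
Proof. by case: l => // y l _; apply/set0Pn; exists y; rewrite inE mem_head. Qed.

Lemma goodE_nil k F : goodE k F (gen [set F] :&: gen [set y in [::]]).
Proof.
exists set0; split.
- by move=> s; rewrite inE.
- apply/setP => x; apply/idP/idP.
    by rewrite inE => /andP[_ /genP[y]]; rewrite inE.
  by case/genP => y; rewrite inE.
- by move=> s t; rewrite inE.
Qed.

Lemma fwd k (Fs Gs : seq {set T}) :
  uniq Fs -> [set F in Fs] = facets D1 ->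
  (forall j, 0 < j < size Fs -> shelling_step k Fs j) ->
  uniq Gs -> [set G in Gs] = facets D2 ->
  (forall j, 0 < j < size Gs -> shelling_step k Gs j) ->
  exists Hs : seq {set T}, [/\ uniq Hs, [set F in Hs] = facets (join D1 D2) &
        forall j, 0 < j < size Hs -> shelling_step k Hs j].
Proof.
move=> uF eF HF uG eG HG.
have mF F : (F \in Fs) = (F \in facets D1) by rewrite -eF inE.
have mG G : (G \in Gs) = (G \in facets D2) by rewrite -eG inE.
have S1 := (shell_iff (step k) Fs).1 HF.
have S2 := (shell_iff (step k) Gs).1 HG.
exists [seq F :|: G | F <- Fs, G <- Gs]; split.
- apply: allpairs_uniq => //; move=> [a b] [a' b'].
  move=> /allpairsP[[a0 b0] /= [aF bG [-> ->]]].
  move=> /allpairsP[[a1 b1] /= [aF' bG' [-> ->]]] /= e.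
  rewrite mF in aF; rewrite mF in aF'; rewrite mG in bG; rewrite mG in bG'.
  have V0 := facet_subV aF; have V1' := facet_subV aF'.
  have W0 := facet_subV bG; have W1 := facet_subV bG'.
  have ea : a0 = a1 by rewrite -(capU1 V0 W0) e capU1.
  have eb : b0 = b1 by rewrite -(capU2 V0 W0) e capU2.
  by rewrite ea eb.
- apply/setP => H; rewrite inE; apply/idP/idP.
    move=> /allpairsP[[F G] /= [FF GG ->]]; apply/facets_joinP.
    by exists F, G; rewrite -mF -mG.
  move=> /facets_joinP[F [G [FF GG ->]]]; apply/allpairsP.
  by exists (F, G); rewrite mF mG.
apply/(shell_iff (step k)) => s1 x s2 e ne.
case: (allpairs_split e) => f1 [F [f2 [g1 [G [g2 [eFs eGs -> es1]]]]]].
have FF : F \in facets D1 by rewrite -mF eFs mem_cat mem_head orbT.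
have GG : G \in facets D2 by rewrite -mG eGs mem_cat mem_head orbT.
have FV := facet_subV FF; have GV := facet_subV GG.
apply/step_goodE; first exact: setseq_neq0.
apply: (goodE_join (Gam1 := gen [set F] :&: gen [set y in f1])
                   (Gam2 := gen [set G] :&: gen [set y in g1])).
- exact: disjFG.
- case: (eqVneq f1 [::]) => [->|ne1]; first exact: goodE_nil.
  by apply/step_goodE; [exact: setseq_neq0 | exact: (S1 _ _ _ eFs ne1)].
- case: (eqVneq g1 [::]) => [->|ne1]; first exact: goodE_nil.
  by apply/step_goodE; [exact: setseq_neq0 | exact: (S2 _ _ _ eGs ne1)].
move=> x'; rewrite !in_setI !gen1 !subsetIr /=.
case xs: (x' \subset F :|: G) => //=.
have f1F a : a \in f1 -> a \subset V1.
  by move=> af; apply: facet_subV; rewrite -mF eFs mem_cat af.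
have GsV b : b \in Gs -> b \subset V2.
  by move=> bG; apply: facet_subV; rewrite -mG.
have g1V b : b \in g1 -> b \subset V2.
  by move=> bg; apply: GsV; rewrite eGs mem_cat bg.
apply/genP/orP.
  case=> y; rewrite inE es1 mem_cat => /orP[/allpairsP[[a b] /= [af bG ->]]|/mapP[b bg ->]] xy.
    left; apply/genP; exists a; first by rewrite inE.
    apply/subsetP => v; rewrite inE => /andP[vx vF].
    have := subsetP xy v vx; rewrite inE => /orP[//|vb].
    case: (nV (subsetP FV v vF) (subsetP (GsV b bG) v vb)).
  right; apply/genP; exists b; first by rewrite inE.
  apply/subsetP => v; rewrite inE => /andP[vx vG].
  have := subsetP xy v vx; rewrite inE => /orP[vF|//].
  case: (nV (subsetP FV v vF) (subsetP GV v vG)).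
case=> [/genP[a]|/genP[b]]; rewrite inE => af sub.
  exists (a :|: G).
    rewrite inE es1 mem_cat; apply/orP; left; apply/allpairsP; exists (a, G).
    by rewrite /= af eGs mem_cat mem_head orbT.
  apply/subsetP => v vx; have := subsetP xs v vx; rewrite !inE => /orP[vF|->].
    by rewrite (subsetP sub) // inE vx vF.
  by rewrite orbT.
exists (F :|: b).
  by rewrite inE es1 mem_cat; apply/orP; right; apply: map_f.
apply/subsetP => v vx; have := subsetP xs v vx; rewrite !inE => /orP[->//|vG].
by rewrite (subsetP sub) ?orbT // inE vx vG.
Qed.

Lemma bwd k G0 (Hs : seq {set T}) : G0 \in facets D2 ->
  uniq Hs -> [set H in Hs] = facets (join D1 D2) ->
  (forall j, 0 < j < size Hs -> shelling_step k Hs j) ->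
  exists Fs : seq {set T}, [/\ uniq Fs, [set F in Fs] = facets D1 &
        forall j, 0 < j < size Fs -> shelling_step k Fs j].
Proof.
move=> G0f uH eH HH.
have mH H : (H \in Hs) = (H \in facets (join D1 D2)) by rewrite -eH inE.
have SH := (shell_iff (step k) Hs).1 HH.
have G0V := facet_subV G0f.
have dec H : H \in Hs -> exists F G,
    [/\ F \in facets D1, G \in facets D2 & H = F :|: G].
  by rewrite mH => /facets_joinP.
pose p := fun H : {set T} => H :&: V2 == G0.
pose f := fun H : {set T} => H :&: V1.
have pf H : H \in Hs -> p H -> exists F, [/\ F \in facets D1, H = F :|: G0 & f H = F].
  move=> /dec[F [G [FF GG ->]]]; have FV := facet_subV FF; have GV := facet_subV GG.
  rewrite /p capU2 // => /eqP ->; exists F; split => //; by rewrite /f capU1.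
exists (map f (filter p Hs)); split.
- rewrite map_inj_in_uniq ?filter_uniq // => H H'.
  rewrite !mem_filter => /andP[pH HH'] /andP[pH' HH''] e.
  case: (pf H HH' pH) => F [FF eF _]; case: (pf H' HH'' pH') => F' [FF' eF' _].
  by move: e; rewrite /f eF eF' !capU1 ?facet_subV // => ->.
- apply/setP => F; rewrite inE; apply/mapP/idP.
    case=> H; rewrite mem_filter => /andP[pH Hin] ->.
    by case: (pf H Hin pH) => F' [FF _ ->].
  move=> FF; have FV := facet_subV FF; exists (F :|: G0).
    rewrite mem_filter /p capU2 // eqxx mH /=; apply/facets_joinP.
    by exists F, G0.
  by rewrite /f capU1.
apply/(shell_iff (step k)) => s1 x s2 e ne.
case: (filter_split e) => h1 [h [h2 [eHs ph -> es1]]].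
have h1n : h1 != [::] by apply: contraNneq ne => h10; rewrite es1 h10.
have hin : h \in Hs by rewrite eHs mem_cat mem_head orbT.
have h1Hs H : H \in h1 -> H \in Hs by move=> Hh; rewrite eHs mem_cat Hh.
case: (pf h hin ph) => F [FF eh ->].
have FV := facet_subV FF.
apply/step_goodE; first exact: setseq_neq0.
have := SH _ _ _ eHs h1n; rewrite eh => /step_goodE => /(_ (setseq_neq0 h1n)) Hg.
apply: (goodE_link (disjFG FV G0V) Hg) => x'.
rewrite !in_setI !gen1; case xF: (x' \subset F) => //=.
have -> : x' :|: G0 \subset F :|: G0 by rewrite setSU.
apply/genP/genP.
  case=> y; rewrite inE es1 => /mapP[H]; rewrite mem_filter => /andP[pH Hh1] -> xy.
  exists H; first by rewrite inE.
  case: (pf H (h1Hs H Hh1) pH) => F' [_ eH' fH]; rewrite fH in xy.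
  by rewrite eH' setSU.
case=> H; rewrite inE => Hh1 sub.
case: (dec H (h1Hs H Hh1)) => F' [G' [FF' GG' eH']].
have F'V := facet_subV FF'; have G'V := facet_subV GG'.
have eG : G' = G0.
  case/facetP: G0f => _ Gm; apply: Gm; first by case/facetP: GG'.
  apply/subsetP => v vG; have := subsetP sub v; rewrite eH' !inE vG orbT => /(_ isT).
  case/orP => [vF|//]; case: (nV (subsetP F'V v vF) (subsetP G0V v vG)).
exists F'.
  rewrite inE es1; apply/mapP; exists H; first by rewrite mem_filter Hh1 andbT /p eH' capU2 // eG.
  by rewrite /f eH' capU1.
apply/subsetP => v vx; have := subsetP sub v; rewrite eH' !inE vx /= => /(_ isT).
case/orP => [//|vG]; have vF := subsetP (elimT idP xF) v vx.
case: (nV (subsetP FV v vF) (subsetP G'V v vG)).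
Qed.

End J.

Lemma exists_facet (T : finType) (D : {set {set T}}) : set0 \in D -> exists G, G \in facets D.
Proof.
move=> D0; case: (@arg_maxnP _ set0 (mem D) (fun G => #|G|) D0) => G GD Gmax.
exists G; apply/facetP; split => // H HD GH; apply/eqP; rewrite eq_sym eqEcard GH.
exact: Gmax.
Qed.

Lemma join_comm (T : finType) (D1 D2 : {set {set T}}) : join D1 D2 = join D2 D1.
Proof.
apply/setP => H; apply/imset2P/imset2P => [[s t sD tD ->]|[s t sD tD ->]];
  by exists t s => //; rewrite setUC.
Qed.

Lemma dimp1_join (T : finType) (D1 D2 : {set {set T}}) : set0 \in D2 ->
  dimp1 D1 <= dimp1 (join D1 D2).
Proof.
move=> D0; rewrite /dimp1; apply/bigmax_leqP => F FD.
have : F :|: set0 \in join D1 D2 by apply: imset2_f.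
rewrite setU0 => FJ; exact: (@leq_bigmax_cond _ (fun G => G \in join D1 D2) (fun G => #|G|) F FJ).
Qed.

Theorem theorem2p7 (T : finType) (D1 D2 : {set {set T}}) (k : nat) :
  is_complex D1 -> is_complex D2 ->
  [disjoint vertices D1 & vertices D2] ->
  k <= dimp1 D1 -> k <= dimp1 D2 ->
  (k_shellable k D1 /\ k_shellable k D2 <-> k_shellable k (join D1 D2)).
Proof.
move=> /andP[D10 _] /andP[D20 _] disj k1 k2; split.
  case=> [[/andP[k0 _] [Fs [uF eF HF]]] [_ [Gs [uG eG HG]]]].
  split; first by rewrite k0 /=; apply: leq_trans k1 (dimp1_join _ D20).
  exact: (fwd disj uF eF HF uG eG HG).
case=> [/andP[k0 _] [Hs [uH eH HH]]]; split.
  split; first by rewrite k0.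
  case: (exists_facet D20) => G0 G0f; exact: (bwd disj G0f uH eH HH).
split; first by rewrite k0.
have disj' : [disjoint vertices D2 & vertices D1] by rewrite disjoint_sym.
rewrite join_comm in eH.
case: (exists_facet D10) => G0 G0f; exact: (bwd disj' G0f uH eH HH).
Qed.
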